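(* Let $S$ be an infinite set and $\mathcal{F}\subseteq 2^S$ nontrivial and closed under finite unions. Let $\mathbf{A}=(A_1,\dots,A_k)$ be a classification problem with $k>1$. Then $\mathbf{A}\in\mathit{core}_k(\mathcal{F})$ if and only if $A_1\cup\dots\cup A_k$ is $\mathcal{F}$-cohesive.
   Context: $\mathcal{F}$ is nontrivial if $\emptyset,S\in\mathcal{F}$ and for all $Q\in\mathcal{F}$ and finite $E\subseteq S$ both $Q\cup E\in\mathcal{F}$ and $Q\setminus E\in\mathcal{F}$. A classification problem is a vector $(A_1,\dots,A_k)$, $k\ge1$, of pairwise disjoint infinite subsets of $S$, of length $k$. For vectors $\mathbf{B}=(B_1,\dots,B_m)$, $\mathbf{Q}=(Q_1,\dots,Q_k)$, $\mathbf{B}\le\mathbf{Q}$ means $1\le m\le k$ and there is an injective $\sigma:\{1,\dots,m\}\to\{1,\dots,k\}$ with $B_i\subseteq Q_{\sigma(i)}$. An $\mathcal{F}$-partition is a vector of pairwise disjoint members of $\mathcal{F}$ whose union is $S$. $\mathit{class}_k(\mathcal{F})$: classification problems $\mathbf{A}$ of length $k$ with $\mathbf{A}\le\mathbf{Q}$ for some $\mathcal{F}$-partition $\mathbf{Q}$ of length $k$. For $k>1$, $\mathit{core}_k(\mathcal{F})$ is the set of classification problems $\mathbf{A}$ of length $k$ such that every classification problem $\mathbf{A}'\le\mathbf{A}$ with $|\mathbf{A}'|>1$ satisfies $\mathbf{A}'\notin\mathit{class}_{|\mathbf{A}'|}(\mathcal{F})$. A set $A\subseteq S$ is $\mathcal{F}$-cohesive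 if $A$ is infinite and for every $Q$ with $Q\in\mathcal{F}$ and $S\setminus Q\in\mathcal{F}$, either $A\cap Q$ or $A\setminus Q$ is finite. *)

(* Defs.v *)
From mathcomp Require Import all_boot.
From mathcomp Require Import boolp classical_sets cardinality.
Set Implicit Arguments. Unset Strict Implicit. Unset Printing Implicit Defensive.
Local Open Scope classical_set_scope.

Section Defs.
Variable S : Type.
Implicit Types (F : set (set S)).

Definition nontrivial F : Prop :=
  F set0 /\ F setT /\
  (forall Q E : set S, F Q -> finite_set E -> F (Q `|` E) /\ F (Q `\` E)).

(* F closed under finite unions (binary unions; the empty union set0 is in F
   by nontriviality) *)
Definition union_closed F : Prop :=
  forall Q1 Q2 : set S, F Q1 -> F Q2 -> F (Q1 `|` Q2).

Definition pairwise_disjoint k (A : 'I_k -> set S) : Prop :=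
  forall i j : 'I_k, i != j -> A i `&` A j = set0.

Definition classif_problem k (A : 'I_k -> set S) : Prop :=
  (1 <= k)%N /\ pairwise_disjoint A /\ (forall i, infinite_set (A i)).

Definition vec_le m k (B : 'I_m -> set S) (Q : 'I_k -> set S) : Prop :=
  (1 <= m)%N /\ (m <= k)%N /\
  exists sigma : 'I_m -> 'I_k, injective sigma /\ forall i, B i `<=` Q (sigma i).

Definition F_partition F k (Q : 'I_k -> set S) : Prop :=
  (forall i, F (Q i)) /\ pairwise_disjoint Q /\ \bigcup_(i in [set: 'I_k]) Q i = setT.

Definition in_class F k (A : 'I_k -> set S) : Prop :=
  classif_problem A /\ exists Q : 'I_k -> set S, F_partition F Q /\ vec_le A Q.

Definition in_core F k (A : 'I_k -> set S) : Prop :=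
  (1 < k)%N /\ classif_problem A /\
  forall m (A' : 'I_m -> set S), classif_problem A' -> vec_le A' A -> (1 < m)%N ->
    ~ in_class F A'.

Definition cohesive F (A : set S) : Prop :=
  infinite_set A /\
  forall Q : set S, F Q -> F (~` Q) -> finite_set (A `&` Q) \/ finite_set (A `\` Q).
End Defs.

(* Main.v *)
Require Import Defs.
From mathcomp Require Import all_boot.
From mathcomp Require Import boolp classical_sets cardinality.
From Stdlib Require Import Classical.
Set Implicit Arguments. Unset Strict Implicit.
Local Open Scope classical_set_scope.

Section Aux.
Variable S : Type.

Lemma pick_inf k (A : 'I_k -> set S) (X : set S) :
  infinite_set ((\bigcup_(i in [set: 'I_k]) A i) `&` X) ->
  exists i, infinite_set (A i `&` X).
Proof.
move=> H; apply: NNPP => Hn; apply: H.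
rewrite setI_bigcupl; apply: bigcup_finite; first exact: finite_finset.
move=> i _; apply: NNPP => Hi; apply: Hn; by exists i.
Qed.

Lemma two_eq (t t' : 'I_2) : val t != 0%N -> val t' != 0%N -> t = t'.
Proof.
case: t => [[|[|a]] Ha] //; case: t' => [[|[|b]] Hb] // _ _; exact: val_inj.
Qed.

Lemma pair_lemma (F : set (set S)) k (A : 'I_k -> set S) (Q : set S) i j :
  (1 < k)%N -> F Q -> F (~` Q) -> i != j ->
  (forall m (A' : 'I_m -> set S), classif_problem A' -> vec_le A' A -> (1 < m)%N ->
    ~ in_class F A') ->
  infinite_set (A i `&` Q) -> infinite_set (A j `&` ~` Q) -> False.
Proof.
move=> k1 FQ FnQ ij Hc Hi Hj.
pose A' (t : 'I_2) := if val t == 0%N then A i `&` Q else A j `&` ~` Q.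
pose Q' (t : 'I_2) := if val t == 0%N then Q else ~` Q.
pose sg (t : 'I_2) := if val t == 0%N then i else j.
have disj : forall t t' : 'I_2, t != t' -> val t == 0%N -> val t' != 0%N.
  move=> [[|[|t]] Ht] [[|[|t']] Ht'] //=.
have cp : classif_problem A'.
  split=> //; split.
  - move=> t t' tt'; rewrite /A'.
    apply/seteqP; split=> x //= [].
    case: ifP => H1; case: ifP => H2.
    + by move: (disj _ _ tt' H1); rewrite H2.
    + by move=> [_ ?] [_ ?].
    + by move=> [_ ?] [_ ?].
    + by move: tt'; rewrite (@two_eq t t' (negbT H1) (negbT H2)) eqxx.
  - by move=> t; rewrite /A'; case: ifP.
apply: (Hc 2 A' cp) => //.
- split=> //; split=> //; exists sg; split.
  + move=> t t'; rewrite /sg; case: ifP => H1; case: ifP => H2 e.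
    * by apply: val_inj; move/eqP: H1 => ->; move/eqP: H2 => ->.
    * by move: ij; rewrite e eqxx.
    * by move: ij; rewrite e eqxx.
    * exact: (@two_eq t t' (negbT H1) (negbT H2)).
  + move=> t; rewrite /A' /sg; case: ifP => _ x []//.
- split=> //; exists Q'; split.
  + split; first by move=> t; rewrite /Q'; case: ifP.
    split.
    * move=> t t' tt'; rewrite /Q'.
      apply/seteqP; split=> x //= [].
      case: ifP => H1; case: ifP => H2.
      -- by move: (disj _ _ tt' H1); rewrite H2.
      -- by move=> ? ?.
      -- by move=> ? ?.
      -- by move: tt'; rewrite (@two_eq t t' (negbT H1) (negbT H2)) eqxx.
    * apply/seteqP; split=> x // _.
      case: (classic (Q x)) => Qx.
      -- by exists (@Ordinal 2 0 isT) => //; rewrite /Q'.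
      -- by exists (@Ordinal 2 1 isT) => //; rewrite /Q'.
  + split=> //; split=> //; exists id; split=> // t.
    by rewrite /A' /Q'; case: ifP => _ x [].
Qed.

Lemma F_bigU (F : set (set S)) m (Q : 'I_m -> set S) (P : pred 'I_m) :
  F set0 -> (forall Q1 Q2 : set S, F Q1 -> F Q2 -> F (Q1 `|` Q2)) ->
  (forall i, F (Q i)) ->
  F (\bigcup_(t in [set x | (x \in enum 'I_m) && P x]) Q t).
Proof.
move=> F0 FU FQ; rewrite bigcup_seq_cond.
by apply: big_ind.
Qed.

End Aux.

Theorem theorem3p5 (S : Type) (F : set (set S)) :
  infinite_set (@setT S) -> nontrivial F -> union_closed F ->
  forall (k : nat) (A : 'I_k -> set S), classif_problem A -> (1 < k)%N ->
  (in_core F A <-> cohesive F (\bigcup_(i in [set: 'I_k]) A i)).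
Proof.
move=> _ [F0 _] FU k A [_ [Adisj Ainf]] k1.
have k0 : (0 < k)%N by apply: ltn_trans k1.
split.
- move=> [_ [_ Hc]]; split.
  + move=> Uf; apply: (Ainf (Ordinal k0)); apply: sub_finite_set Uf.
    by move=> x Ax; exists (Ordinal k0).
  + move=> Q FQ FnQ; apply: NNPP => Hn.
    have [H1 H2] : infinite_set ((\bigcup_(i in [set: 'I_k]) A i) `&` Q) /\
                   infinite_set ((\bigcup_(i in [set: 'I_k]) A i) `&` ~` Q).
      by split=> Hf; apply: Hn; [left|right].
    have [i Hi] := pick_inf H1.
    have [i' Hi'] := pick_inf H2.
    case: (eqVneq i i') => [e|ne]; last first.
      exact: (pair_lemma k1 FQ FnQ ne Hc Hi Hi').
    subst i'.
    pose j : 'I_k := if val i == 0%N then Ordinal k1 else Ordinal k0.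
    have ji : j != i.
      rewrite /j; case: ifP => H; apply/eqP => e; move: H; rewrite -e //=.
    have : infinite_set (A j `&` Q) \/ infinite_set (A j `&` ~` Q).
      apply: NNPP => Hn2; apply: (Ainf j).
      have -> : A j = (A j `&` Q) `|` (A j `&` ~` Q).
        by rewrite -setIUr setUCr setIT.
      rewrite finite_setU; split; apply: NNPP => ?; apply: Hn2; by [left|right].
    move=> [Hj|Hj].
    * exact: (pair_lemma k1 FQ FnQ ji Hc Hj Hi').
    * by apply: (pair_lemma k1 FQ FnQ _ Hc Hi Hj); rewrite eq_sym.
- move=> [_ Hcoh]; split=> //; split; first by split.
  move=> m A' [_ [_ A'inf]] [_ [_ [sg [sginj Hsg]]]] m1
    [_ [Q [[FQ [Qdisj Qcov]] [_ [_ [tau [tauinj Htau]]]]]]].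
  have m0 : (0 < m)%N by apply: ltn_trans m1.
  pose i0 : 'I_m := Ordinal m0.
  pose i1 : 'I_m := Ordinal m1.
  pose q := Q (tau i0).
  have nq : ~` q = \bigcup_(t in [set x | (x \in enum 'I_m) && (x != tau i0)]) Q t.
    apply/seteqP; split=> x.
    + move=> nqx; have : [set: S] x by [].
      rewrite -Qcov => -[j _ Qjx]; exists j => //=.
      rewrite mem_enum /=; apply/eqP => e; apply: nqx; by rewrite /q -e.
    + move=> [j /= /andP[_ jne] Qjx] qx.
      have : (Q j `&` Q (tau i0)) x by [].
      by rewrite Qdisj.
  have FnQ : F (~` q) by rewrite nq; apply: F_bigU.
  have ti : tau i1 != tau i0.
    apply/eqP => /tauinj e; by move: (congr1 val e).
  case: (Hcoh q (FQ _) FnQ) => Hf.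
  + apply: (A'inf i0); apply: sub_finite_set Hf => x Ax; split.
    * by exists (sg i0) => //; apply: Hsg.
    * exact: Htau.
  + apply: (A'inf i1); apply: sub_finite_set Hf => x Ax; split.
    * by exists (sg i1) => //; apply: Hsg.
    * move=> qx.
      have : (Q (tau i1) `&` Q (tau i0)) x by split => //; apply: Htau.
      by rewrite Qdisj.
Qed.
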